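(* Let $(\mathcal W,\rhd)$ be a $\lambda$A-frame and $\eta$ a hereditary type environment. If $A\simeq B$, then $\mathcal I[A]^\eta_p=\mathcal I[B]^\eta_p$ for every $p\in\mathcal W$.
   Context: Type expressions: fix a countably infinite set of type variables $X,Y,Z,\dots$. Pseudo type expressions are generated by $A::=X\mid A\to A\mid \bullet A\mid \mu X.A$ ($\mu$ binds $X$; $\alpha$-convertible expressions are identified; $\to$ associates to the right; $\bullet$ binds tighter than $\to$, which binds tighter than $\mu$). $A[B/X]$ denotes capture-avoiding substitution. $\top$ abbreviates $\mu X.\bullet X$, and $\bullet^n A$ denotes $A$ prefixed by $n$ copies of $\bullet$. The tail $t(A)$ is defined by $t(X)=X$, $t(A\to B)=t(B)$, $t(\bullet A)=\bullet t(A)$, $t(\mu X.A)=\mu X.t(A)$; it always has the form $\bullet^{m_0}\mu X_1.\bullet^{m_1}\mu X_2.\cdots\mu X_n.\bullet^{m_n}Y$. $A$ is a $\top$-variant iff $Y=X_i$ for some $1\le i\le n$ with $X_i\notin\{X_{i+1},\dots,X_n\}$ and $m_i+\dots+m_n\ge 1$. $A$ is proper in $X$ iff: a variable $Y$ is proper in $X$ iff $Y\neq X$; $\bullet A$ is always proper in $X$; $A\to B$ is proper in $X$ iff both $A,B$ are proper in $X$ or $B$ is a $\top$-variant; for $Y\ne X$, $\mu Y.A$ is proper in $X$ iff $A$ is proper in $X$ or $\mu Y.A$ is a $\top$-variant. Type expressions are the least set of pseudo type expressions containing all type variables, closed under $\to$ and $\bullet$, and containing $\mu X.A$ whenever it contains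 $A$ and $A$ is proper in $X$. Equality: $\cong$ is the least relation on type expressions such that: $A\cong A$; $A\cong B$ implies $B\cong A$; $A\cong B$ and $B\cong C$ imply $A\cong C$; $A\cong B$ implies $\bullet A\cong\bullet B$; $A\cong C$ and $B\cong D$ imply $A\to B\cong C\to D$; $A\to\top\cong\top$; $\mu X.A\cong A[\mu X.A/X]$; and if $A\cong C[A/X]$ with $C$ proper in $X$, then $A\cong\mu X.C$. $\simeq$ is the least relation satisfying the same closure conditions and additionally $\bullet(A\to B)\simeq\bullet A\to\bullet B$. Semantics: a syntactical $\lambda$-algebra $(\mathcal V,\cdot,[\![-]\!])$ consists of a nonempty set $\mathcal V$, a map $\cdot:\mathcal V\times\mathcal V\to\mathcal V$, and values $[\![M]\!]_\rho\in\mathcal V$ for untyped $\lambda$-terms $M$ and maps $\rho$ from individual variables to $\mathcal V$, such that $[\![x]\!]_\rho=\rho(x)$, $[\![MN]\!]_\rho=[\![M]\!]_\rho\cdot[\![N]\!]_\rho$, $[\![\lambda x.M]\!]_\rho\cdot v=[\![M]\!]_{\rho[v/x]}$, $[\![M]\!]_\rho$ depends only on $\rho$ restricted to free variables of $M$, and $M=_\beta N$ implies $[\![M]\!]_\rho=[\![N]\!]_\rho$; fix one. A well-founded frame is a pair $(\mathcal W,\rhd)$ with $\mathcal W$ nonempty and $\rhd$ a binary relation on $\mathcal W$ admitting no infinite chain $p_0\rhd p_1\rhd p_2\rhd\cdots$; $\trianglerighteq$ denotes the reflexive-transitive closure of $\rhd$. $\rhd$ is locally linear if whenever $p\rhd q$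 there is $r$ with $p\trianglerighteq r\rhd q$ such that $r\rhd s$ implies $q\trianglerighteq s$ for all $s$. A $\lambda$A-frame is a well-founded frame whose $\rhd$ is locally linear. A type environment $\eta$ assigns a set $\eta(X)_p\subseteq\mathcal V$ to each type variable $X$ and world $p$; it is hereditary if $p\rhd q$ implies $\eta(X)_p\subseteq\eta(X)_q$. For hereditary $\eta$, $\mathcal I[A]^\eta_p\subseteq\mathcal V$ is defined (by well-founded induction on $p$ and the syntactic rank of $A$) by: $\mathcal I[A]^\eta_p=\mathcal V$ if $A$ is a $\top$-variant; otherwise $\mathcal I[X]^\eta_p=\eta(X)_p$; $\mathcal I[\bullet A]^\eta_p=\{u\mid u\in\mathcal I[A]^\eta_q\text{ for all }q\text{ with }p\rhd q\}$; $\mathcal I[A\to B]^\eta_p=\{u\mid \text{for all }q\text{ with }p\trianglerighteq q\text{ and all }v\in\mathcal I[A]^\eta_q,\ u\cdot v\in\mathcal I[B]^\eta_q\}$; $\mathcal I[\mu X.A]^\eta_p=\mathcal I[A[\mu X.A/X]]^\eta_p$. *)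

(* Defs.v *)
(* Syntax is represented with de Bruijn indices, so that
   alpha-convertible expressions are literally identified. *)
From Stdlib Require Import Relations Arith.

Inductive ty : Type :=
| TVar : nat -> ty
| TArr : ty -> ty -> ty
| TLater : ty -> ty
| TMu : ty -> ty.   (* TMu A binds de Bruijn index 0 in A *)

Fixpoint tshift (c : nat) (A : ty) : ty :=
  match A with
  | TVar k => if c <=? k then TVar (S k) else TVar k
  | TArr A1 A2 => TArr (tshift c A1) (tshift c A2)
  | TLater A1 => TLater (tshift c A1)
  | TMu A1 => TMu (tshift (S c) A1)
  end.

Fixpoint tsubst (j : nat) (B : ty) (A : ty) : ty :=
  match A with
  | TVar k => if k =? j then B else if j <? k then TVar (pred k) else TVar k
  | TArr A1 A2 => TArr (tsubst j B A1) (tsubst j B A2)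
  | TLater A1 => TLater (tsubst j B A1)
  | TMu A1 => TMu (tsubst (S j) (tshift 0 B) A1)
  end.

(* A[B/X] where X is the variable bound by an enclosing mu (index 0) *)
Definition tsubst0 (B A : ty) : ty := tsubst 0 B A.

Definition top : ty := TMu (TLater (TVar 0)).

Fixpoint tail (A : ty) : ty :=
  match A with
  | TVar k => TVar k
  | TArr _ B => tail B
  | TLater A1 => TLater (tail A1)
  | TMu A1 => TMu (tail A1)
  end.

(* On a tail  •^{m0} mu X1. •^{m1} ... mu Xn. •^{mn} Y :
   g k = None        : index k is free in the tail
   g k = Some b      : index k is bound by some X_i, and b = (m_i+...+m_n >= 1)
                       counted so far. *)
Fixpoint top_aux (g : nat -> option bool) (T : ty) : bool :=
  match T with
  | TVar k => match g k with Some true => true | _ => false end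
  | TArr _ _ => false
  | TLater T1 => top_aux (fun k => option_map (fun _ => true) (g k)) T1
  | TMu T1 => top_aux (fun k => match k with 0 => Some false | S k' => g k' end) T1
  end.

Definition is_top (A : ty) : bool := top_aux (fun _ => None) (tail A).

Fixpoint proper (j : nat) (A : ty) : Prop :=
  match A with
  | TVar k => k <> j
  | TArr A1 A2 => (proper j A1 /\ proper j A2) \/ is_top A2 = true
  | TLater _ => True
  | TMu A1 => proper (S j) A1 \/ is_top (TMu A1) = true
  end.

Fixpoint wf (A : ty) : Prop :=
  match A with
  | TVar _ => True
  | TArr A1 A2 => wf A1 /\ wf A2
  | TLater A1 => wf A1
  | TMu A1 => wf A1 /\ proper 0 A1
  end.

(* the equality  ≃  (with the extra rule •(A->B) ≃ •A -> •B) *)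
Inductive teqL : ty -> ty -> Prop :=
| teqL_refl A : wf A -> teqL A A
| teqL_sym A B : teqL A B -> teqL B A
| teqL_trans A B C : teqL A B -> teqL B C -> teqL A C
| teqL_later A B : teqL A B -> teqL (TLater A) (TLater B)
| teqL_arr A B C D : teqL A C -> teqL B D -> teqL (TArr A B) (TArr C D)
| teqL_top A : wf A -> teqL (TArr A top) top
| teqL_unfold A : wf (TMu A) -> teqL (TMu A) (tsubst0 (TMu A) A)
| teqL_fix A C : wf C -> proper 0 C -> teqL A (tsubst0 A C) -> teqL A (TMu C)
| teqL_dist A B : wf A -> wf B ->
    teqL (TLater (TArr A B)) (TArr (TLater A) (TLater B)).

Inductive lam : Type :=
| LVar : nat -> lam
| LApp : lam -> lam -> lam
| LAbs : lam -> lam.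

Fixpoint lshift (c : nat) (M : lam) : lam :=
  match M with
  | LVar k => if c <=? k then LVar (S k) else LVar k
  | LApp M1 M2 => LApp (lshift c M1) (lshift c M2)
  | LAbs M1 => LAbs (lshift (S c) M1)
  end.

Fixpoint lsubst (j : nat) (N : lam) (M : lam) : lam :=
  match M with
  | LVar k => if k =? j then N else if j <? k then LVar (pred k) else LVar k
  | LApp M1 M2 => LApp (lsubst j N M1) (lsubst j N M2)
  | LAbs M1 => LAbs (lsubst (S j) (lshift 0 N) M1)
  end.

Fixpoint lfree (x : nat) (M : lam) : Prop :=
  match M with
  | LVar k => k = x
  | LApp M1 M2 => lfree x M1 \/ lfree x M2
  | LAbs M1 => lfree (S x) M1
  end.

Inductive beq : lam -> lam -> Prop :=
| beq_refl M : beq M M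
| beq_sym M N : beq M N -> beq N M
| beq_trans M N P : beq M N -> beq N P -> beq M P
| beq_app M M' N N' : beq M M' -> beq N N' -> beq (LApp M N) (LApp M' N')
| beq_abs M M' : beq M M' -> beq (LAbs M) (LAbs M')
| beq_beta M N : beq (LApp (LAbs M) N) (lsubst 0 N M).

Definition scons {T : Type} (v : T) (rho : nat -> T) (n : nat) : T :=
  match n with 0 => v | S k => rho k end.

Record SynLamAlg : Type := {
  carrier : Type;
  app : carrier -> carrier -> carrier;
  sem : lam -> (nat -> carrier) -> carrier;
  sla_nonempty : inhabited carrier;
  sla_var : forall x rho, sem (LVar x) rho = rho x;
  sla_app : forall M N rho, sem (LApp M N) rho = app (sem M rho) (sem N rho);
  sla_abs : forall M rho v, app (sem (LAbs M) rho) v = sem M (scons v rho);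
  sla_fv : forall M rho rho', (forall x, lfree x M -> rho x = rho' x) ->
             sem M rho = sem M rho';
  sla_beta : forall M N rho, beq M N -> sem M rho = sem N rho
}.

Definition well_founded_frame (W : Type) (R : W -> W -> Prop) : Prop :=
  inhabited W /\ ~ (exists f : nat -> W, forall n, R (f n) (f (S n))).

Definition locally_linear (W : Type) (R : W -> W -> Prop) : Prop :=
  forall p q, R p q ->
    exists r, clos_refl_trans W R p r /\ R r q /\
      (forall s, R r s -> clos_refl_trans W R q s).

Definition lambdaA_frame (W : Type) (R : W -> W -> Prop) : Prop :=
  well_founded_frame W R /\ locally_linear W R.

Definition hereditary (V W : Type) (R : W -> W -> Prop)
  (eta : nat -> W -> V -> Prop) : Prop :=
  forall X p q, R p q -> forall u, eta X p u -> eta X q u.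

(* I : ty -> W -> (subsets of V) satisfies the defining clauses of
   I[A]^eta_p on all type expressions A and all worlds p.  (These clauses
   determine I uniquely on type expressions by well-founded induction.) *)
Definition is_interp (L : SynLamAlg) (W : Type) (R : W -> W -> Prop)
  (eta : nat -> W -> carrier L -> Prop)
  (I : ty -> W -> carrier L -> Prop) : Prop :=
  forall A p, wf A ->
    (is_top A = true -> forall u, I A p u) /\
    (is_top A = false ->
      match A with
      | TVar X => forall u, I A p u <-> eta X p u
      | TLater A1 => forall u, I A p u <-> (forall q, R p q -> I A1 q u)
      | TArr A1 A2 => forall u, I A p u <->
          (forall q, clos_refl_trans W R p q ->
             forall v, I A1 q v -> I A2 q (app L u v))
      | TMu A1 => forall u, I A p u <-> I (tsubst0 (TMu A1) A1) p u
      end).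

(* Main.v *)
Require Import Defs.
From Stdlib Require Import Relations Arith Lia Classical IndefiniteDescription.

Ltac nd := repeat match goal with
  | |- context [?a <=? ?b] => destruct (Nat.leb_spec a b)
  | |- context [?a =? ?b] => destruct (Nat.eqb_spec a b)
  | |- context [?a <? ?b] => destruct (Nat.ltb_spec a b)
  end.

Lemma shift_shift : forall T c d, c <= d ->
  tshift c (tshift d T) = tshift (S d) (tshift c T).
Proof.
  induction T; intros c d Hcd; cbn [tshift tsubst].
  - nd; cbn [tshift tsubst]; nd; try reflexivity; lia.
  - rewrite IHT1, IHT2 by lia; reflexivity.
  - rewrite IHT by lia; reflexivity.
  - rewrite IHT by lia; reflexivity.
Qed.

Lemma subst_shift_cancel : forall T c N, tsubst c N (tshift c T) = T.
Proof.
  induction T; intros c N; cbn [tshift tsubst].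
  - nd; cbn [tshift tsubst]; nd; try reflexivity; try lia; try (f_equal; lia).
  - rewrite IHT1, IHT2; reflexivity.
  - rewrite IHT; reflexivity.
  - rewrite IHT; reflexivity.
Qed.

Lemma shift_subst : forall T c i N, c <= i ->
  tshift c (tsubst i N T) = tsubst (S i) (tshift c N) (tshift c T).
Proof.
  induction T; intros c i N Hci; cbn [tshift tsubst].
  - nd; cbn [tshift tsubst]; nd; try reflexivity; try lia; f_equal; lia.
  - rewrite IHT1, IHT2 by lia; reflexivity.
  - rewrite IHT by lia; reflexivity.
  - rewrite IHT by lia. rewrite (shift_shift N 0 c) by lia. reflexivity.
Qed.

Lemma subst_subst : forall D c i M X, c <= i ->
  tsubst i X (tsubst c M D) = tsubst c (tsubst i X M) (tsubst (S i) (tshift c X) D).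
Proof.
  induction D; intros c i M X Hci; cbn [tshift tsubst].
  - nd; cbn [tshift tsubst]; nd; try reflexivity; try lia;
      try (rewrite subst_shift_cancel; reflexivity); f_equal; lia.
  - rewrite IHD1, IHD2 by lia; reflexivity.
  - rewrite IHD by lia; reflexivity.
  - rewrite IHD by lia. rewrite shift_subst by lia.
    rewrite (shift_shift X 0 c) by lia. reflexivity.
Qed.


Lemma tail_shift : forall T c, tail (tshift c T) = tshift c (tail T).
Proof. induction T; intros c; cbn [tail tshift]; try rewrite IHT; try rewrite IHT2; auto.
  nd; reflexivity. Qed.

Lemma top_aux_shift : forall T c g h,
  (forall k, h k = g (if c <=? k then S k else k)) ->
  top_aux g (tshift c T) = top_aux h T.
Proof.
  induction T; intros c g h Hh; cbn [tshift top_aux].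
  - rewrite Hh. destruct (c <=? n); reflexivity.
  - reflexivity.
  - apply IHT. intros k. rewrite Hh. reflexivity.
  - apply IHT. intros [|k]; [reflexivity|]. cbn. rewrite Hh.
    destruct (c <=? k); reflexivity.
Qed.

Definition robust (N : ty) := forall h, top_aux h (tail N) = true.

Lemma robust_shift : forall N c, robust N -> robust (tshift c N).
Proof. intros N c HN h. rewrite tail_shift.
  rewrite (top_aux_shift _ c h (fun k => h (if c <=? k then S k else k))); auto. Qed.

Lemma top_mono : forall T g1 g2, (forall k b, g1 k = Some b -> g2 k = Some b) ->
  top_aux g1 T = true -> top_aux g2 T = true.
Proof.
  induction T; intros g1 g2 Hg; cbn [top_aux].
  - destruct (g1 n) as [[|]|] eqn:E; try discriminate. rewrite (Hg _ _ E). auto.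
  - auto.
  - apply IHT. intros k b. destruct (g1 k) eqn:E; try discriminate.
    rewrite (Hg _ _ E). auto.
  - apply IHT. intros [|k] b; cbn; auto.
Qed.

Lemma is_top_robust : forall T, is_top T = true -> robust T.
Proof. intros T H h. eapply top_mono; [|exact H]. discriminate. Qed.

Lemma top_subst : forall A j N g g',
  (forall k, k < j -> g' k = g k) ->
  (forall k, j < k -> g' k = g (pred k)) ->
  (g' j <> None -> robust N) ->
  top_aux g' (tail A) = true -> top_aux g (tail (tsubst j N A)) = true.
Proof.
  induction A; intros j N g g' H1 H2 H3 HA; cbn [tail tsubst top_aux] in *.
  - destruct (Nat.eqb_spec n j).
    + subst. apply H3. destruct (g' j); congruence.
    + destruct (Nat.ltb_spec j n); cbn [tail top_aux].
      * rewrite <- H2 by lia. exact HA.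
      * rewrite <- H1 by lia. exact HA.
  - eapply IHA2; eauto.
  - eapply IHA; [| | |exact HA].
    + intros k Hk. simpl. rewrite H1; auto.
    + intros k Hk. simpl. rewrite H2; auto.
    + intros Hn. apply H3. intro E. apply Hn. simpl. rewrite E. reflexivity.
  - eapply IHA; [| | |exact HA].
    + intros [|k] Hk; cbn; auto. apply H1; lia.
    + intros [|k] Hk; [lia|]. cbn. rewrite H2 by lia.
      destruct k; [lia|]. reflexivity.
    + intros Hn. apply robust_shift. apply H3. exact Hn.
Qed.

Lemma is_top_subst : forall A j N, is_top A = true -> is_top (tsubst j N A) = true.
Proof. intros A j N H. unfold is_top in *. eapply top_subst; [| | |exact H]; auto. intro Hc; exfalso; apply Hc; reflexivity. Qed.

Lemma is_top_unfold : forall A, is_top (TMu A) = true -> is_top (tsubst0 (TMu A) A) = true.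
Proof.
  intros A H. unfold is_top, tsubst0 in *. cbn [tail top_aux] in H.
  eapply top_subst; [| | |exact H].
  - intros; lia.
  - intros [|k] Hk; [lia|]; reflexivity.
  - intros _. apply is_top_robust. exact H.
Qed.

Lemma is_top_shift : forall T c, is_top (tshift c T) = is_top T.
Proof. intros. unfold is_top. rewrite tail_shift. apply top_aux_shift. reflexivity. Qed.

Lemma proper_shift_self : forall T c, proper c (tshift c T).
Proof. induction T; intros c; cbn [tshift proper]; auto.
  nd; cbn [proper]; lia. Qed.

Lemma proper_shift : forall T c i, proper i T ->
  proper (if c <=? i then S i else i) (tshift c T).
Proof.
  induction T; intros c i H; cbn [tshift proper] in *.
  - nd; cbn [proper]; lia.
  - destruct H as [[Ha Hb]|Ht]; [left; auto|right].
    rewrite is_top_shift; auto.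
  - auto.
  - destruct H as [H|H].
    + left. specialize (IHT (S c) (S i) H). cbn in IHT.
      destruct (c <=? i); exact IHT.
    + right. change (is_top (tshift c (TMu T)) = true). rewrite is_top_shift; auto.
Qed.

Lemma proper_subst : forall A j N i i', i <> j -> (i < j -> i' = i) -> (j < i -> i' = pred i) ->
  proper i' N -> proper i A -> proper i' (tsubst j N A).
Proof.
  induction A; intros j N i i' Hij H1 H2 HN HA; cbn [tsubst proper] in *.
  - nd; cbn [proper]; auto; lia.
  - destruct HA as [[Ha Hb]|Ht]; [left; split; eauto|right].
    apply is_top_subst; auto.
  - auto.
  - destruct HA as [HA|HA].
    + left. eapply IHA with (i := S i); try lia.
      replace (S i') with (if 0 <=? i' then S i' else i') by reflexivity.
      apply proper_shift; auto. exact HA.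
    + right. change (is_top (tsubst j N (TMu A)) = true). apply is_top_subst; auto.
Qed.

Lemma wf_shift : forall T c, wf T -> wf (tshift c T).
Proof.
  induction T; intros c H; cbn [tshift wf] in *; auto.
  - nd; exact I.
  - destruct H; split; auto.
  - destruct H; split; auto.
    replace 0 with (if S c <=? 0 then 1 else 0) by reflexivity.
    apply proper_shift; auto.
Qed.

Lemma wf_subst : forall A j N, wf N -> wf A -> wf (tsubst j N A).
Proof.
  induction A; intros j N HN HA; cbn [tsubst wf] in *; auto.
  - nd; cbn; auto.
  - destruct HA; split; auto.
  - destruct HA; split.
    + apply IHA; auto. apply wf_shift; auto.
    + eapply proper_subst with (i := 0); try lia; auto. apply proper_shift_self.
Qed.

Lemma teqL_wf : forall A B, teqL A B -> wf A /\ wf B.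
Proof.
  induction 1; cbn [wf] in *; try tauto.
  - unfold top; cbn; tauto.
  - split; auto. apply wf_subst; cbn; tauto.
Qed.

Fixpoint rank (T : ty) : nat :=
  if is_top T then 0 else
  match T with
  | TArr A B => S (Nat.max (rank A) (rank B))
  | TMu A => S (rank A)
  | _ => 0
  end.

Lemma rank_top : forall T, is_top T = true -> rank T = 0.
Proof. intros T H; destruct T; cbn [rank]; rewrite H; reflexivity. Qed.

Lemma rank_arr : forall A B, is_top B = false -> rank (TArr A B) = S (Nat.max (rank A) (rank B)).
Proof. intros A B H. cbn [rank]. change (is_top (TArr A B)) with (is_top B). rewrite H. reflexivity. Qed.

Lemma rank_arr_le : forall A B, rank (TArr A B) <= S (Nat.max (rank A) (rank B)).
Proof. intros A B. cbn [rank]. destruct (is_top (TArr A B)); lia. Qed.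

Lemma rank_mu : forall A, is_top (TMu A) = false -> rank (TMu A) = S (rank A).
Proof. intros A H. cbn [rank]. rewrite H. reflexivity. Qed.

Lemma rank_mu_le : forall A, rank (TMu A) <= S (rank A).
Proof. intros A. cbn [rank]. destruct (is_top (TMu A)); lia. Qed.

Lemma rank_subst : forall D j N, proper j D -> rank (tsubst j N D) <= rank D.
Proof.
  induction D; intros j N H.
  - cbn [proper tsubst] in *. assert (Hv : forall k, rank (TVar k) = 0) by (intros k; cbn [rank]; destruct (is_top (TVar k)); reflexivity). nd; try lia; rewrite !Hv; lia.
  - destruct (is_top D2) eqn:E.
    + rewrite rank_top; [lia|]. apply (is_top_subst (TArr D1 D2)); exact E.
    + rewrite rank_arr by exact E. cbn [proper] in H.
      destruct H as [[H1 H2]|H]; [|congruence].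
      cbn [tsubst]. eapply Nat.le_trans; [apply rank_arr_le|].
      specialize (IHD1 j N H1). specialize (IHD2 j N H2). lia.
  - cbn [tsubst rank]. destruct (is_top _); lia.
  - destruct (is_top (TMu D)) eqn:E.
    + rewrite rank_top; [lia|]. apply is_top_subst; exact E.
    + rewrite rank_mu by exact E. cbn [proper] in H.
      destruct H as [H|H]; [|congruence].
      cbn [tsubst]. eapply Nat.le_trans; [apply rank_mu_le|].
      specialize (IHD (S j) (tshift 0 N) H). lia.
Qed.

Section Sem.
Variables (L : SynLamAlg) (W : Type) (R : W -> W -> Prop)
  (eta : nat -> W -> carrier L -> Prop) (I : ty -> W -> carrier L -> Prop).
Hypothesis HF : lambdaA_frame W R.
Hypothesis Heta : hereditary (carrier L) W R eta.
Hypothesis HI : is_interp L W R eta I.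

Definition Rs (q p : W) := R p q.
Notation rt := (clos_refl_trans W R).

Lemma acc_all : forall p, Acc Rs p.
Proof.
  destruct HF as [[_ Hno] _]. intros p. apply NNPP; intro Hna.
  assert (step : forall x, ~ Acc Rs x -> {y | R x y /\ ~ Acc Rs y}).
  { intros x Hx. apply constructive_indefinite_description.
    apply NNPP; intro Hn. apply Hx. constructor. intros y Hy.
    apply NNPP; intro Hy'. apply Hn. exists y; auto. }
  pose (f := fix f (n : nat) : {x | ~ Acc Rs x} :=
    match n with
    | 0 => exist _ p Hna
    | S n => let (y, Hy) := step (proj1_sig (f n)) (proj2_sig (f n)) in exist _ y (proj2 Hy)
    end).
  apply Hno. exists (fun n => proj1_sig (f n)). intros n. cbn.
  destruct (step (proj1_sig (f n)) (proj2_sig (f n))) as [y [Hy1 Hy2]]. cbn. exact Hy1.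
Qed.

Lemma rt_inv : forall p q, rt p q -> q = p \/ exists q1, R p q1 /\ rt q1 q.
Proof.
  intros p q H. apply clos_rt_rt1n in H. destruct H; [left; auto|right].
  exists y; split; auto. apply clos_rt1n_rt; auto.
Qed.

Lemma rt_succ : forall p q r, R p q -> rt q r -> rt p r.
Proof. intros p q r H1 H2. eapply rt_trans; [apply rt_step; exact H1| exact H2]. Qed.

Lemma I_top : forall A p u, wf A -> is_top A = true -> I A p u.
Proof. intros A p u Hw Ht. exact (proj1 (HI A p Hw) Ht u). Qed.

Lemma I_later : forall A p u, wf A ->
  (I (TLater A) p u <-> forall q, R p q -> I A q u).
Proof.
  intros A p u Hw. destruct (is_top A) eqn:E.
  - split; intros; apply I_top; auto.
  - exact (proj2 (HI (TLater A) p Hw) E u).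
Qed.

Lemma I_arr : forall A B p u, wf A -> wf B ->
  (I (TArr A B) p u <-> forall q, rt p q -> forall v, I A q v -> I B q (app L u v)).
Proof.
  intros A B p u Ha Hb. destruct (is_top B) eqn:E.
  - split; intros; apply I_top; cbn; auto.
  - exact (proj2 (HI (TArr A B) p (conj Ha Hb)) E u).
Qed.

Lemma I_mu : forall A p u, wf (TMu A) ->
  (I (TMu A) p u <-> I (tsubst0 (TMu A) A) p u).
Proof.
  intros A p u Hw. destruct (is_top (TMu A)) eqn:E.
  - split; intros; apply I_top; auto.
    + apply wf_subst; auto. apply Hw.
    + apply is_top_unfold; auto.
  - exact (proj2 (HI (TMu A) p Hw) E u).
Qed.

Lemma wf_unfold : forall A, wf (TMu A) -> wf (tsubst0 (TMu A) A).
Proof. intros A H. apply wf_subst; auto. apply H. Qed.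

Lemma rank_unfold : forall A, wf (TMu A) -> is_top (TMu A) = false ->
  rank (tsubst0 (TMu A) A) < rank (TMu A).
Proof.
  intros A Hw Ht. rewrite rank_mu by auto.
  pose proof (rank_subst A 0 (TMu A) (proj2 Hw)). unfold tsubst0. lia.
Qed.

Lemma persist : forall p A u, wf A -> I A p u -> forall q, R p q -> I A q u.
Proof.
  intros p. induction (acc_all p) as [p _ IHp].
  assert (K : forall n A u, rank A < n -> wf A -> I A p u -> forall q, R p q -> I A q u).
  { induction n; intros A u Hr Hw HA q Hpq; [lia|].
    destruct (is_top A) eqn:E; [apply I_top; auto|].
    destruct A as [k|A1 A2|A1|A1].
    - pose proof (proj2 (HI (TVar k) p Hw) E u) as H1.
      pose proof (proj2 (HI (TVar k) q Hw) E u) as H2.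
      apply H2. apply H1 in HA. eapply Heta; eauto.
    - destruct Hw as [Hw1 Hw2]. rewrite I_arr in * by auto.
      intros r Hqr v Hv. apply HA; auto. eapply rt_trans; [apply rt_step; eauto|]; auto.
    - rewrite I_later in * by auto. intros r Hqr.
      eapply IHp; [exact Hpq|exact Hw|apply HA; auto|exact Hqr].
    - rewrite I_mu in * by auto. eapply IHn; eauto.
      + pose proof (rank_unfold A1 Hw E). lia.
      + apply wf_unfold; auto. }
  intros A u. apply (K (S (rank A))). lia.
Qed.

Lemma persist_rt : forall p q A u, wf A -> rt p q -> I A p u -> I A q u.
Proof. intros p q A u Hw H. induction H; intros; eauto using persist. Qed.

Definition agree (X Y : ty) q := forall u, I X q u <-> I Y q u.

Lemma congr_any : forall p D j X Y, wf D -> wf X -> wf Y ->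
  (forall q, rt p q -> agree X Y q) ->
  forall q, rt p q -> agree (tsubst j X D) (tsubst j Y D) q.
Proof.
  intros p. induction (acc_all p) as [p _ IHp].
  intros D0 j0 X Y HD0 HX HY Hag.
  assert (K : forall n D j, rank D < n -> wf D -> agree (tsubst j X D) (tsubst j Y D) p).
  { induction n; intros D j Hr HD; [lia|]. intros u.
    destruct (is_top D) eqn:E.
    { split; intros; apply I_top; try apply wf_subst; auto; apply is_top_subst; auto. }
    destruct D as [k|D1 D2|D1|D1].
    - cbn [tsubst]. destruct (Nat.eqb_spec k j).
      + apply Hag. apply rt_refl.
      + reflexivity.
    - destruct HD as [HD1 HD2]. cbn [tsubst].
      rewrite !I_arr by (apply wf_subst; auto).
      assert (E' : is_top D2 = false) by exact E.
      rewrite rank_arr in Hr by exact E'.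
      assert (A1 : forall q, rt p q -> agree (tsubst j X D1) (tsubst j Y D1) q /\
                                        agree (tsubst j X D2) (tsubst j Y D2) q).
      { intros q Hq. destruct (rt_inv _ _ Hq) as [->|[q1 [H1 H2]]].
        - split; apply IHn; auto; lia.
        - split; eapply IHp; eauto; intros r Hr'; apply Hag;
            eapply rt_succ; eauto. }
      split; intros H q Hq v Hv; apply (A1 q Hq); apply H; auto; apply (A1 q Hq); auto.
    - cbn [tsubst]. rewrite !I_later by (apply wf_subst; auto).
      assert (A1 : forall q, R p q -> agree (tsubst j X D1) (tsubst j Y D1) q).
      { intros q Hq. eapply IHp; eauto; [|apply rt_refl].
        intros r Hr'; apply Hag; eapply rt_succ; eauto. }
      split; intros H q Hq; apply (A1 q Hq); auto.
    - cbn [tsubst].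
      assert (Hw : forall Z, wf Z -> wf (TMu (tsubst (S j) (tshift 0 Z) D1))).
      { intros Z HZ. change (wf (tsubst j Z (TMu D1))). apply wf_subst; auto. }
      rewrite !I_mu by auto. unfold tsubst0.
      change (TMu (tsubst (S j) (tshift 0 X) D1)) with (tsubst j X (TMu D1)).
      change (TMu (tsubst (S j) (tshift 0 Y) D1)) with (tsubst j Y (TMu D1)).
      rewrite <- !(subst_subst D1 0 j (TMu D1)) by lia.
      apply IHn; [|apply wf_unfold; auto].
      pose proof (rank_unfold D1 HD E) as Hru; unfold tsubst0 in Hru; lia. }
  intros q Hq. destruct (rt_inv _ _ Hq) as [->|[q1 [H1 H2]]].
  - apply (K (S (rank D0))); auto.
  - eapply IHp; eauto. intros r Hr'; apply Hag; eapply rt_succ; eauto.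
Qed.

Lemma congr_guard : forall p D j X Y, wf D -> proper j D -> wf X -> wf Y ->
  (forall q, R p q -> forall r, rt q r -> agree X Y r) ->
  agree (tsubst j X D) (tsubst j Y D) p.
Proof.
  intros p D0 j0 X Y HD0 HP0 HX HY Hag.
  assert (K : forall n D j, rank D < n -> wf D -> proper j D -> agree (tsubst j X D) (tsubst j Y D) p).
  { induction n; intros D j Hr HD HP; [lia|]. intros u.
    destruct (is_top D) eqn:E.
    { split; intros; apply I_top; try apply wf_subst; auto; apply is_top_subst; auto. }
    destruct D as [k|D1 D2|D1|D1].
    - cbn [tsubst proper] in *. destruct (Nat.eqb_spec k j); [congruence|reflexivity].
    - destruct HD as [HD1 HD2]. cbn [tsubst].
      rewrite !I_arr by (apply wf_subst; auto).
      assert (E' : is_top D2 = false) by exact E.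
      rewrite rank_arr in Hr by exact E'.
      cbn [proper] in HP. destruct HP as [[HP1 HP2]|HP]; [|congruence].
      assert (A1 : forall q, rt p q -> agree (tsubst j X D1) (tsubst j Y D1) q /\
                                        agree (tsubst j X D2) (tsubst j Y D2) q).
      { intros q Hq. destruct (rt_inv _ _ Hq) as [->|[q1 [H1 H2]]].
        - split; apply IHn; auto; lia.
        - split; eapply congr_any; eauto. }
      split; intros H q Hq v Hv; apply (A1 q Hq); apply H; auto; apply (A1 q Hq); auto.
    - cbn [tsubst]. rewrite !I_later by (apply wf_subst; auto).
      assert (A1 : forall q, R p q -> agree (tsubst j X D1) (tsubst j Y D1) q).
      { intros q Hq. eapply congr_any; eauto. apply rt_refl. }
      split; intros H q Hq; apply (A1 q Hq); auto.
    - cbn [tsubst].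
      assert (Hw : forall Z, wf Z -> wf (TMu (tsubst (S j) (tshift 0 Z) D1))).
      { intros Z HZ. change (wf (tsubst j Z (TMu D1))). apply wf_subst; auto. }
      rewrite !I_mu by auto. unfold tsubst0.
      change (TMu (tsubst (S j) (tshift 0 X) D1)) with (tsubst j X (TMu D1)).
      change (TMu (tsubst (S j) (tshift 0 Y) D1)) with (tsubst j Y (TMu D1)).
      rewrite <- !(subst_subst D1 0 j (TMu D1)) by lia.
      apply IHn; [| apply wf_unfold; auto |].
      + pose proof (rank_unfold D1 HD E) as Hru; unfold tsubst0 in Hru; lia.
      + assert (HP1 : proper (S j) D1) by (destruct HP as [H|H]; [exact H|congruence]).
        eapply proper_subst with (i := S j); try lia; [exact HP|exact HP1]. }
  apply (K (S (rank D0))); auto.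
Qed.

Lemma fix_sem : forall A C, wf C -> proper 0 C -> wf A ->
  (forall p, agree A (tsubst0 A C) p) -> forall p, agree A (TMu C) p.
Proof.
  intros A C HC HP HA Heq.
  assert (HwM : wf (TMu C)) by (split; auto).
  assert (K : forall p q, rt p q -> agree A (TMu C) q).
  { intros p. induction (acc_all p) as [p _ IHp]. intros q Hq.
    destruct (rt_inv _ _ Hq) as [->|[q1 [H1 H2]]]; [|eapply IHp; eauto].
    intros u. rewrite (Heq p u). rewrite I_mu by auto. unfold tsubst0.
    apply congr_guard; auto. }
  intros p. apply (K p p). apply rt_refl.
Qed.

Lemma sound : forall A B, teqL A B -> forall p u, I A p u <-> I B p u.
Proof.
  intros A B H. induction H; intros p u.
  - reflexivity.
  - symmetry; auto.
  - rewrite IHteqL1; auto.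
  - apply teqL_wf in H as [Ha Hb]. rewrite !I_later by auto.
    split; intros H q Hq; apply IHteqL; auto.
  - apply teqL_wf in H as [Ha Hc]. apply teqL_wf in H0 as [Hb Hd].
    rewrite !I_arr by auto.
    split; intros H q Hq v Hv; apply IHteqL2; apply H; auto; apply IHteqL1; auto.
  - assert (Ht : wf top) by (unfold top; cbn; tauto).
    split; intros; apply I_top; cbn; auto.
  - apply I_mu; auto.
  - apply teqL_wf in H1 as [Ha _]. apply fix_sem; auto.
  - destruct HF as [_ HLL].
    rewrite I_later by (cbn; auto). rewrite I_arr by (cbn; auto).
    split.
    + intros H1 q Hq v Hv. rewrite I_later in * by auto. intros r Hqr.
      assert (Hx : exists q1, R p q1 /\ rt q1 r).
      { destruct (rt_inv _ _ Hq) as [->|[q1 [H2 H3]]].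
        - exists r; split; auto. apply rt_refl.
        - exists q1; split; auto. eapply rt_trans; eauto. apply rt_step; auto. }
      destruct Hx as [q1 [H2 H3]].
      specialize (H1 q1 H2). rewrite I_arr in H1 by auto.
      apply H1; auto.
    + intros H1 q Hq. rewrite I_arr by auto. intros r Hqr v Hv.
      assert (Hs : exists s, rt p s /\ R s r /\ forall t, R s t -> rt r t).
      { apply clos_rt_rtn1 in Hqr. destruct Hqr as [|r0 r Hr0 Hq0].
        - destruct (HLL p q Hq) as [s [Hs1 [Hs2 Hs3]]]. eauto.
        - destruct (HLL r0 r Hr0) as [s [Hs1 [Hs2 Hs3]]]. exists s; split; auto.
          eapply rt_trans; [apply rt_step; eauto|].
          eapply rt_trans; [apply clos_rtn1_rt; eauto|]. auto. }
      destruct Hs as [s [Hs1 [Hs2 Hs3]]].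
      specialize (H1 s Hs1 v). rewrite !I_later in H1 by auto.
      apply H1; auto. intros t Hst. eapply persist_rt; eauto.
Qed.

End Sem.

Theorem theorem4 (L : SynLamAlg) (W : Type) (R : W -> W -> Prop)
  (eta : nat -> W -> carrier L -> Prop) (I : ty -> W -> carrier L -> Prop) :
  lambdaA_frame W R ->
  hereditary (carrier L) W R eta ->
  is_interp L W R eta I ->
  forall A B : ty, teqL A B ->
  forall (p : W) (u : carrier L), I A p u <-> I B p u.
Proof.
  intros HF Heta HI A B H p u. exact (sound L W R eta I HF Heta HI A B H p u).
Qed.
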